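(* Let $n$ be a natural number which is not a perfect square and such that $v_2(n)\ge0$ is even (in particular $n$ may be odd). Then $D_{S(n)^*}=C_{S(n)^*}=3$.
   Context: For a natural number $n$, $\mathbb Z_n=\mathbb Z/n\mathbb Z$, $S(n)=\{x^2:x\in\mathbb Z_n\}$, $S(n)^*=S(n)\setminus\{0\}$. For $A\subseteq\mathbb Z_n$, a sequence $(y_1,\dots,y_t)$ ($t\ge1$) in $\mathbb Z_n$ is an $A$-weighted zero-sum sequence if there exist $a_1,\dots,a_t\in A$ with $\sum a_iy_i=0$; a sequence has an $A$-weighted zero-sum subsequence if some nonempty subsequence is an $A$-weighted zero-sum sequence. $D_A(n)$ is the least positive integer $t$ such that every sequence of length $t$ in $\mathbb Z_n$ has an $A$-weighted zero-sum subsequence; $C_A(n)$ is the least positive integer $t$ such that every sequence of length $t$ in $\mathbb Z_n$ has an $A$-weighted zero-sum subsequence consisting of consecutive terms. $D_{S(n)^*}=D_{S(n)^*}(n)$, $C_{S(n)^*}=C_{S(n)^*}(n)$. $v_2(n)$ is the exponent of $2$ in $n$. *)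

(* Defs.v *)
From mathcomp Require Import all_boot all_order all_algebra.
Set Implicit Arguments. Unset Strict Implicit. Unset Printing Implicit Defensive.
Import GRing.Theory.
Local Open Scope ring_scope.

(* S(n) = set of squares in Z_n, and S(n)^* = S(n) \ {0}.  Here 'Z_n is used;
   the main theorem only concerns non-square n, so n >= 2 and 'Z_n = Z/nZ. *)
Definition Sq (n : nat) : {set 'Z_n} := [set x ^+ 2 | x : 'Z_n].
Definition Sqstar (n : nat) : {set 'Z_n} := Sq n :\ 0.

Definition has_wzs (n : nat) (A : {set 'Z_n}) (t : nat) (y : 'I_t -> 'Z_n) : Prop :=
  exists (I : {set 'I_t}) (a : 'I_t -> 'Z_n),
    I != set0 /\ (forall i, i \in I -> a i \in A) /\
    \sum_(i in I) a i * y i = 0.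

Definition has_wzs_consec (n : nat) (A : {set 'Z_n}) (t : nat) (y : 'I_t -> 'Z_n) : Prop :=
  exists (l r : nat) (a : 'I_t -> 'Z_n),
    (l < r)%N /\ (r <= t)%N /\
    (forall i : 'I_t, (l <= i < r)%N -> a i \in A) /\
    \sum_(i : 'I_t | (l <= i < r)%N) a i * y i = 0.

Definition is_least_pos (P : nat -> Prop) (m : nat) : Prop :=
  (0 < m)%N /\ P m /\ forall t, (0 < t)%N -> (t < m)%N -> ~ P t.

Definition D_is (n : nat) (A : {set 'Z_n}) (m : nat) : Prop :=
  is_least_pos (fun t => forall y : 'I_t -> 'Z_n, has_wzs A y) m.
Definition C_is (n : nat) (A : {set 'Z_n}) (m : nat) : Prop :=
  is_least_pos (fun t => forall y : 'I_t -> 'Z_n, has_wzs_consec A y) m.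

Definition perfect_square (n : nat) : Prop := exists k : nat, n = (k * k)%N.

(* Main.v *)
Require Import Defs.
From mathcomp Require Import all_boot all_order all_algebra all_fingroup all_solvable all_field.
From mathcomp Require Import zify ring.
Set Implicit Arguments. Unset Strict Implicit. Unset Printing Implicit Defensive.
Import GRing.Theory.
Local Open Scope ring_scope.

Lemma fin_id (K : fieldType) (a b e s x0 x1 x2 : K) : x0 != 0 -> x1 != 0 -> x2 != 0 -> s != 0 ->
  e^+2 = (a^+2 + b^+2) * (-x1/x0)^-1 -> s^+2 = (-x1/x0) * (-x2/x1) ->
  a^+2*x0 + e^+2*x1 + (b/s)^+2 * x2 = 0.
Proof.
move=> x00 x10 x20 s0 he hs; rewrite he expr_div_n hs; field.
by rewrite x00 x10 !oppr_eq0 x20 x10.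
Qed.

Definition NR (q u : nat) := forall a b : nat, ~~ (q %| b)%N -> ~~ (q %| a ^ 2 + b ^ 2 * u)%N.

Lemma fl2 (K : fieldType) (a b x : K) : b != 0 -> a ^+ 2 + b ^+ 2 * - x = 0 -> (a / b) ^+ 2 = x.
Proof.
move=> b0 e; apply: (mulIf (expf_neq0 2 b0)); rewrite expr_div_n divfK ?expf_neq0 //.
by move/eqP: e; rewrite mulrN subr_eq0 mulrC => /eqP.
Qed.

Section Fp.
Variable p : nat.
Hypothesis pp : prime p.
Hypothesis po : odd p.
Local Notation F := 'F_p.

Lemma gen_Fp : exists g : F, g != 0 /\ (forall x : F, x != 0 -> exists k, x = g ^+ k)
  /\ (forall k j, g ^+ k = g ^+ j -> odd k = odd j).
Proof.
have := field_unit_group_cyclic [set: {unit F}]%G.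
case/cyclicP=> u Hu.
exists (val u); split; first by rewrite -unitfE (valP u).
split.
  move=> x x0.
  have ux : x \is a GRing.unit by rewrite unitfE.
  have : (Sub x ux : {unit F}) \in <[u]>%g by rewrite -Hu inE.
  case/cycleP=> i Hi; exists i.
  by rewrite -FinRing.val_unitX -Hi.
move=> k j Hkj.
have : (u ^+ k == u ^+ j)%g by apply/eqP/val_inj; rewrite !FinRing.val_unitX.
rewrite eq_expg_mod_order.
have -> : #[u]%g = p.-1 by rewrite /order -Hu card_finField_unit card_Fp.
have h2 : (2 %| p.-1)%N by case: p pp po => [|q] //= _; rewrite -dvdn2 /=; case: q => //.
move=> /eqP /(congr1 (modn^~ 2)); rewrite !modn_dvdm //.
by rewrite !modn2 => /(congr1 (fun b : nat => b == 1%N)); rewrite !eqb1 => ->.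
Qed.

Definition sqb (x : F) := [exists c : F, c ^+ 2 == x].

Lemma sqbP x : reflect (exists c, c ^+ 2 = x) (sqb x).
Proof. by apply: (iffP existsP) => [[c /eqP]|[c <-]]; exists c. Qed.

Lemma NN_sq x y : x != 0 -> y != 0 -> ~~ sqb x -> ~~ sqb y -> sqb (x * y).
Proof.
have [g [g0 [gen par]]] := gen_Fp.
move=> /gen [k ->] /gen [j ->] nx ny.
have odd_of : forall i, ~~ sqb (g ^+ i) -> odd i.
  move=> i; apply: contraR => ei; apply/sqbP; exists (g ^+ i./2).
  by rewrite -exprM muln2 even_halfK.
have ok := odd_of _ nx; have oj := odd_of _ ny.
apply/sqbP; exists (g ^+ (k + j)./2); rewrite -exprM -exprD muln2 even_halfK //.
by rewrite oddD ok oj.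
Qed.

Lemma exists_nonsq : exists x : F, x != 0 /\ ~~ sqb x.
Proof.
have [g [g0 [gen par]]] := gen_Fp.
exists g; split => //; apply/sqbP => -[c hc].
have c0 : c != 0 by apply: contraNneq g0 => c0; rewrite -hc c0 expr0n.
have [j hj] := gen c c0.
have := par 1%N (2 * j)%N; rewrite (mulnC 2%N) exprM -hj hc expr1 => /(_ erefl).
by rewrite oddM andbF.
Qed.

Lemma natF (x : F) : x = (val x)%:R.
Proof.
apply: val_inj; rewrite /= val_Fp_nat // modn_small //.
by case: x => /= m; rewrite Fp_cast.
Qed.

Lemma F3 : exists a b : F, [/\ a != 0, b != 0, a ^+ 2 + b ^+ 2 != 0 & ~~ sqb (a ^+ 2 + b ^+ 2)].
Proof.
case: (boolP [exists a : F, exists b : F, [&& a != 0, b != 0, a ^+ 2 + b ^+ 2 != 0 & ~~ sqb (a ^+ 2 + b ^+ 2)]]).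
  by case/existsP=> a /existsP [b /and4P [? ? ? ?]]; exists a, b; split.
move=> H.
have H' : forall a b : F, a != 0 -> b != 0 -> (a ^+ 2 + b ^+ 2 == 0) || sqb (a ^+ 2 + b ^+ 2).
  move=> a b a0 b0; case: (boolP (_ == 0)) => //= h.
  apply: contraT => ns; exfalso; move/negP: H; apply; apply/existsP; exists a; apply/existsP; exists b.
  by rewrite a0 b0 h ns.
have all : forall k : nat, ((k%:R : F) == 0) || sqb k%:R.
  elim=> [|k IH]; first by rewrite eqxx.
  rewrite -natr1.
  case: (boolP (k%:R == 0 :> F)) IH => [/eqP -> _|k0 /= /sqbP [c hc]].
    by rewrite add0r orbC; apply/orP; left; apply/sqbP; exists 1; rewrite expr1n.
  have c0 : c != 0 by apply: contraNneq k0 => c0; rewrite -hc c0 expr0n.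
  by have := H' c 1 c0 (oner_neq0 _); rewrite expr1n hc.
have [x [x0 nx]] := exists_nonsq.
by have := all (val x); rewrite -natF (negbTE x0) (negbTE nx).
Qed.

Lemma sq_nz (x c : F) : x != 0 -> c ^+ 2 = x -> c != 0.
Proof. by move=> x0 hc; apply: contraNneq x0 => c0; rewrite -hc c0 expr0n. Qed.

Lemma three (x0 x1 x2 : F) :
  x0 = 0 \/ x1 = 0 \/ x2 = 0 \/
  (exists c0 c1, [/\ c0 != 0, c1 != 0 & c0 ^+ 2 * x0 + c1 ^+ 2 * x1 = 0]) \/
  (exists c1 c2, [/\ c1 != 0, c2 != 0 & c1 ^+ 2 * x1 + c2 ^+ 2 * x2 = 0]) \/
  (exists c0 c1 c2, [/\ c0 != 0, c1 != 0, c2 != 0 &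
       c0 ^+ 2 * x0 + c1 ^+ 2 * x1 + c2 ^+ 2 * x2 = 0]).
Proof.
have [->|x00] := eqVneq x0 0; first by left.
have [->|x10] := eqVneq x1 0; first by right; left.
have [->|x20] := eqVneq x2 0; first by right; right; left.
right; right; right.
have nu0 : - x1 / x0 != 0 by rewrite mulf_neq0 ?oppr_eq0 ?invr_eq0.
have mu0 : - x2 / x1 != 0 by rewrite mulf_neq0 ?oppr_eq0 ?invr_eq0.
case: (boolP (sqb (- x1 / x0))) => [/sqbP [d hd]|nnu].
  left; exists d, 1; split; first exact: sq_nz hd; first exact: oner_neq0.
  by rewrite hd expr1n mul1r divfK // addNr.
case: (boolP (sqb (- x2 / x1))) => [/sqbP [d hd]|nmu].
  right; left; exists d, 1; split; first exact: sq_nz hd; first exact: oner_neq0.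
  by rewrite hd expr1n mul1r divfK // addNr.
right; right.
have /sqbP [s hs] := NN_sq nu0 mu0 nnu nmu.
have s0 : s != 0 by apply: sq_nz hs; rewrite mulf_neq0.
have [a [b [a0 b0 w0 nw]]] := F3.
have nui0 : (- x1 / x0)^-1 != 0 by rewrite invr_eq0.
have nnui : ~~ sqb (- x1 / x0)^-1.
  apply: contra nnu => /sqbP [t ht]; apply/sqbP; exists t^-1.
  by rewrite exprVn ht invrK.
have /sqbP [e he] := NN_sq w0 nui0 nw nnui.
exists a, e, (b / s); split => //.
- by apply: sq_nz he; rewrite mulf_neq0.
- by rewrite mulf_neq0 ?invr_eq0.
exact: fin_id.
Qed.

Lemma sum3 (R : nmodType) l r (f : 'I_3 -> R) :
  \sum_(i : 'I_3 | (l <= i < r)%N) f i =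
  (if (l <= 0 < r)%N then f ord0 else 0) + (if (l <= 1 < r)%N then f (inord 1) else 0)
  + (if (l <= 2 < r)%N then f (inord 2) else 0).
Proof.
rewrite big_mkcond !big_ord_recl big_ord0 /= addr0 addrA.
have -> : (lift ord0 ord0 : 'I_3) = inord 1 by apply: val_inj; rewrite /= inordK.
have -> : (lift ord0 (lift ord0 ord0) : 'I_3) = inord 2 by apply: val_inj; rewrite /= inordK.
by [].
Qed.

Lemma transl l r (cF : 'I_3 -> F) (Y : 'I_3 -> nat) :
  (forall i : 'I_3, (l <= i < r)%N -> cF i != 0) ->
  \sum_(i : 'I_3 | (l <= i < r)%N) (cF i ^+ 2 * (Y i)%:R) = 0 ->
  (forall i : 'I_3, (l <= i < r)%N -> ~~ (p %| val (cF i))%N) /\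
  (p %| \sum_(i : 'I_3 | (l <= i < r)%N) (val (cF i) ^ 2 * Y i))%N.
Proof.
move=> nz s0; split.
  by move=> i /nz; rewrite (dvdn_pcharf (pchar_Fp pp)) -natF.
rewrite (dvdn_pcharf (pchar_Fp pp)) natr_sum (eq_bigr (fun i : 'I_3 => cF i ^+ 2 * (Y i)%:R)) ?s0 // => i _.
by rewrite natrM natrX -natF.
Qed.

Lemma key (Y : 'I_3 -> nat) : exists l r (c : 'I_3 -> nat),
  [/\ (l < r)%N, (r <= 3)%N, (forall i : 'I_3, (l <= i < r)%N -> ~~ (p %| c i)%N) &
     (p %| \sum_(i : 'I_3 | (l <= i < r)%N) (c i ^ 2 * Y i))%N].
Proof.
pose x i : F := (Y i)%:R.
suff [l [r [cF [lr r3 nz s0]]]] : exists l r (cF : 'I_3 -> F), [/\ (l < r)%N, (r <= 3)%N,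
   (forall i : 'I_3, (l <= i < r)%N -> cF i != 0) &
   \sum_(i : 'I_3 | (l <= i < r)%N) (cF i ^+ 2 * (Y i)%:R) = 0].
  have [h1 h2] := transl nz s0.
  by exists l, r, (fun i => val (cF i)); split.
pose g (a b c : F) (i : 'I_3) := nth 0 [:: a; b; c] i.
have xE : forall i, (Y i)%:R = x i by [].
have [x0|[x1|[x2|[[c0 [c1 [h0 h1 e]]]|[[c1 [c2 [h1 h2 e]]]|[c0 [c1 [c2 [h0 h1 h2 e]]]]]]]]] :=
  three (x ord0) (x (inord 1)) (x (inord 2)).
- exists 0%N, 1%N, (g 1 0 0); split => //.
    by move=> i; rewrite ltnS leqn0 => /andP [_ /eqP i0]; rewrite /g i0 /=.
  by rewrite sum3 /= /g /= ?inordK // xE x0 !addr0 mulr0.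
- exists 1%N, 2%N, (g 0 1 0); split => //.
    by move=> i /andP [i1 i2]; rewrite /g; have -> : nat_of_ord i = 1%N by apply/eqP; rewrite eqn_leq i1 -ltnS i2.
  by rewrite sum3 /= /g /= ?inordK //=; move: x1; rewrite /x => ->; rewrite mulr0 add0r addr0.
- exists 2%N, 3%N, (g 0 0 1); split => //.
    by move=> i /andP [i1 i2]; rewrite /g; have -> : nat_of_ord i = 2%N by apply/eqP; rewrite eqn_leq i1 -ltnS i2.
  by rewrite sum3 /= /g /= ?inordK //=; move: x2; rewrite /x => ->; rewrite mulr0 !add0r.
- exists 0%N, 2%N, (g c0 c1 0); split => //.
    by move=> i; case: i => [[|[|k]]] //=.
  by rewrite sum3 /= /g /= ?inordK // !xE addr0.
- exists 1%N, 3%N, (g 0 c1 c2); split => //.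
    by move=> i; case: i => [[|[|[|k]]]] //=.
  by rewrite sum3 /= /g /= ?inordK // !xE add0r.
- exists 0%N, 3%N, (g c0 c1 c2); split => //.
    by move=> i; case: i => [[|[|[|k]]]] //=.
  by rewrite sum3 /= /g /= ?inordK // !xE.
Qed.

Lemma NR_exists : exists t, NR p t.
Proof.
have [x [x0 nx]] := exists_nonsq.
exists (val (- x)) => a b nb; apply/negP => hd.
move: nb; rewrite (dvdn_pcharf (pchar_Fp pp)) => b0.
move: hd; rewrite (dvdn_pcharf (pchar_Fp pp)) natrD natrM !natrX -natF => /eqP e.
by move/negP: nx; apply; apply/sqbP; exists (a%:R / b%:R); apply: fl2.
Qed.
End Fp.
Local Close Scope ring_scope.

Lemma NR_mod q u v : u %% q = v %% q -> NR q u -> NR q v.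
Proof.
move=> huv h a b nb; have := h a b nb.
by rewrite /dvdn -modnDmr -modnMmr huv modnMmr modnDmr.
Qed.

Lemma u_exists (s : seq nat) : all (fun q => prime q && odd q) s ->
  exists u, u %% 4 = 1 /\ forall q, q \in s -> NR q u.
Proof.
elim: s => [|q s IH] /=; first by exists 1.
case/andP => /andP [qp qo] hs; have [u [u4 hu]] := IH hs.
case: (boolP (q \in s)) => qs.
  by exists u; split => // q'; rewrite inE => /orP [/eqP->|]; auto.
have [t ht] := NR_exists qp qo.
set L := (4 * \prod_(q' <- s) q')%N.
have cqL : coprime L q.
  rewrite coprime_sym coprimeMr; apply/andP; split.
    rewrite prime_coprime // (_ : 4 = 2 ^ 2)%N // Euclid_dvdX // andbT.
    by rewrite dvdn_prime2 //; apply: contraTneq qo => ->.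
  rewrite prime_coprime // Euclid_dvd_prod // big_has; apply/hasPn => q' q's.
  have /andP [q'p _] := allP hs q' q's.
  by rewrite dvdn_prime2 //; apply: contra qs => /eqP ->.
exists (chinese L q u t); split.
  have := chinese_modl cqL u t => e.
  have d4 : (4 %| L)%N by rewrite dvdn_mulr.
  by rewrite -(modn_dvdm _ d4) e modn_dvdm.
move=> q'; rewrite inE => /orP [/eqP->|q's].
  by apply: NR_mod ht; rewrite chinese_modr.
apply: NR_mod (hu q' q's).
have dL : (q' %| L)%N by rewrite dvdn_mull // (big_rem q' q's) /= dvdn_mulr.
by rewrite -[RHS](modn_dvdm _ dL) chinese_modl // modn_dvdm.
Qed.

Lemma u_for_n n : exists u, u %% 4 = 1 /\ forall q, prime q -> odd q -> (q %| n)%N -> 0 < n -> NR q u.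
Proof.
have [|u [u4 hu]] := @u_exists [seq q <- primes n | odd q].
  apply/allP => q; rewrite mem_filter mem_primes => /andP [-> /andP [-> _]] //.
exists u; split => // q qp qo qn n0; apply: hu.
by rewrite mem_filter mem_primes qo qp n0 qn.
Qed.

Lemma u_odd u : u %% 4 = 1 -> ~~ (2 %| u)%N.
Proof. by move=> h; rewrite /dvdn -(modn_dvdm _ (isT : 2 %| 4)%N) h. Qed.

Lemma coprime_un n u : 0 < n -> u %% 4 = 1 ->
  (forall q, prime q -> odd q -> (q %| n)%N -> NR q u) -> coprime n u.
Proof.
move=> n0 u4 hu; rewrite /coprime; apply: contraT => g1.
have g0 : 0 < gcdn n u by rewrite gcdn_gt0 n0.
have g2 : 1 < gcdn n u by case: (gcdn n u) g0 g1 => [|[|]].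
have qp := pdiv_prime g2.
have qn := dvdn_trans (pdiv_dvd _) (dvdn_gcdl n u).
have qu := dvdn_trans (pdiv_dvd _) (dvdn_gcdr n u).
case: (even_prime qp) => [q2|qo].
  by have := u_odd u4; rewrite -q2 qu.
have nq1 : ~~ (pdiv (gcdn n u) %| 1) by rewrite dvdn1 neq_ltn (prime_gt1 qp) orbT.
by have := hu _ qp qo qn 0 1 nq1; rewrite exp1n mul1n exp0n // add0n qu.
Qed.

Lemma dvd_cancel q t w : 0 < q -> (q ^ t.+1 %| w * q ^ t) -> (q %| w).
Proof.
by move=> q0; rewrite expnSr (mulnC w) dvdn_pmul2l // expn_gt0 q0.
Qed.

Lemma pair_contra n u X Z : 1 < n -> ~~ odd (logn 2 n) -> u %% 4 = 1 ->
  (forall q, prime q -> odd q -> (q %| n) -> NR q u) ->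
  ~~ (n %| X ^ 2) -> ~~ (n %| Z ^ 2) -> (n %| X ^ 2 + Z ^ 2 * u) -> False.
Proof.
move=> n1 ev u4 hu nX nZ hs.
have n0 : 0 < n by apply: ltnW.
have X0 : 0 < X by rewrite lt0n; apply: contraNneq nX => ->; rewrite exp0n // dvdn0.
have Z0 : 0 < Z by rewrite lt0n; apply: contraNneq nZ => ->; rewrite exp0n // dvdn0.
have [q qprim nqX] : exists2 q, q \in \pi(n) & ~~ (n`_q %| X ^ 2).
  case: (boolP (has (fun q : nat => ~~ (n`_q %| X ^ 2)) (primes n))).
    by case/hasP => q qin h; exists q.
  move/hasPn => h; exfalso; move/negP: nX; apply; apply/dvdn_partP => // q qin.
  by have := h q qin; rewrite negbK.
move: qprim; rewrite mem_primes n0 /= => /andP [qp qn].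
rewrite p_part in nqX; set e := logn q n in nqX.
have q0 := prime_gt0 qp.
have hq : q ^ e %| X ^ 2 + Z ^ 2 * u := dvdn_trans (pfactor_dvdnn q n) hs.
have nqu : ~~ (q %| u).
  case: (even_prime qp) => [->|qo]; first exact: u_odd.
  by have := hu q qp qo qn 0 1; rewrite exp1n mul1n exp0n // add0n; apply; rewrite dvdn1 neq_ltn (prime_gt1 qp) orbT.
have [X' cX XE] := pfactor_coprime qp X0; set j := logn q X in XE.
have [Z' cZ ZE] := pfactor_coprime qp Z0; set i := logn q Z in ZE.
rewrite prime_coprime // in cX; rewrite prime_coprime // in cZ.
have nX' : ~~ (q %| X' ^ 2) by rewrite Euclid_dvdX // andbT.
have nZ' : ~~ (q %| Z' ^ 2 * u) by rewrite Euclid_dvdM // negb_or nqu Euclid_dvdX // !andbT.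
have X2 : X ^ 2 = X' ^ 2 * q ^ (2 * j) by rewrite XE expnMn -expnM (mulnC j).
have Z2 : Z ^ 2 * u = Z' ^ 2 * u * q ^ (2 * i) by rewrite ZE expnMn -expnM (mulnC i) mulnAC.
have je : 2 * j < e.
  rewrite ltnNge; apply: contra nqX => le.
  by rewrite X2 dvdn_mull // dvdn_exp2l.
rewrite X2 Z2 in hq.
case: (ltngtP i j) => [ij|ji|ij].
-
  have d1 : q ^ (2 * i).+1 %| X' ^ 2 * q ^ (2 * j) by apply: dvdn_mull; apply: dvdn_exp2l; clear -ij je; lia.
  have d2 : q ^ (2 * i).+1 %| X' ^ 2 * q ^ (2 * j) + Z' ^ 2 * u * q ^ (2 * i).
    by apply: dvdn_trans hq; apply: dvdn_exp2l; clear -ij je; lia.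
  rewrite dvdn_addr // in d2.
  by move/negP: nZ'; apply; apply: dvd_cancel d2.
-
  have d1 : q ^ (2 * j).+1 %| Z' ^ 2 * u * q ^ (2 * i) by apply: dvdn_mull; apply: dvdn_exp2l; clear -ji je; lia.
  have d2 : q ^ (2 * j).+1 %| X' ^ 2 * q ^ (2 * j) + Z' ^ 2 * u * q ^ (2 * i).
    by apply: dvdn_trans hq; apply: dvdn_exp2l; clear -ji je; lia.
  rewrite dvdn_addl // in d2.
  by move/negP: nX'; apply; apply: dvd_cancel d2.
-
  rewrite ij -mulnDl in hq.
  case: (even_prime qp) => [q2|qo].
  + have ee : ~~ odd e by rewrite /e q2.
    have e2 : 2 * j + 2 <= e.
      have := odd_double_half e; rewrite (negbTE ee) add0n => eE.
      rewrite -eE -muln2; rewrite -eE -muln2 in je; clear -je; lia.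
    have d4 : q ^ (2 * j) * 4 %| (X' ^ 2 + Z' ^ 2 * u) * q ^ (2 * j).
      by apply: dvdn_trans hq; rewrite q2 -(expnD 2 _ 2) dvdn_exp2l.
    rewrite [X in _ %| X]mulnC dvdn_pmul2l ?expn_gt0 ?q0 // in d4.
    rewrite q2 in cX cZ.
    have oX := cX; have oZ := cZ.
    rewrite dvdn2 negbK in oX; rewrite dvdn2 negbK in oZ.
    have XX := odd_double_half X'; have ZZ := odd_double_half Z'.
    rewrite oX in XX; rewrite oZ in ZZ.
    have UU := divn_eq u 4; rewrite u4 in UU.
    move: d4; rewrite -XX -ZZ UU.
    set a := X'./2; set b := Z'./2; set c := u %/ 4.
    have -> : (1 + a.*2) ^ 2 + (1 + b.*2) ^ 2 * (c * 4 + 1) =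
              4 * ((a * a + a) + (b * b + b) * (4 * c + 1) + c) + 2.
      rewrite -!muln2; ring.
    by rewrite dvdn_addr ?dvdn_mulr.
  + have d : q ^ (2 * j).+1 %| (X' ^ 2 + Z' ^ 2 * u) * q ^ (2 * j).
      by apply: dvdn_trans hq; rewrite dvdn_exp2l.
    have := hu q qp qo qn X' Z' cZ.
    by rewrite (dvd_cancel q0 d).
Qed.

Lemma nonsq_prime n : ~ perfect_square n -> exists2 p, prime p & odd (logn p n).
Proof.
elim: n {-2}n (leqnn n) => [|N IH] n le H.
  by case: n le H => // _ H; exfalso; apply: H; exists 0.
case: (ltnP n 2) => [n2|n2].
  by case: n {le} n2 H => [|[|]] // _ H; exfalso; apply: H; [exists 0|exists 1].
have pp := pdiv_prime n2.
have n0 : 0 < n by apply: leq_trans n2.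
have [m cpm nE] := pfactor_coprime pp n0.
set p := pdiv n in pp cpm nE *; set e := logn p n in nE *.
case: (boolP (odd e)) => oe; first by exists p.
have e0 : 0 < e by rewrite /e -(pfactor_dvdn 1 pp n0) expn1 pdiv_dvd.
have m0 : 0 < m by move: n0; rewrite nE muln_gt0 => /andP [].
have p1 : 1 < p by apply: prime_gt1.
have pe : 1 < p ^ e by rewrite -{1}(expn0 p) ltn_exp2l.
have mlt : m < n by rewrite nE -{1}(muln1 m) ltn_pmul2l.
have Hm : ~ perfect_square m.
  move=> [k mk]; apply: H; exists (k * p ^ e./2).
  rewrite nE mk -{1}(odd_double_half e) (negbTE oe) add0n -muln2 expnM.
  by rewrite -mulnn mulnACA.
have [q qp oq] := IH m (leq_trans (ltnSE (leq_trans mlt le)) (leqnn _)) Hm.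
exists q => //.
have pe0 : 0 < p ^ e by apply: ltnW.
rewrite nE (lognM _ m0 pe0) lognX (logn_prime _ pp).
case: eqP => [qe|_]; last by rewrite /= muln0 addn0.
move: oq; rewrite qe.
by have := logn_Gauss 1 cpm; rewrite muln1 logn1 => ->.
Qed.

Lemma Zn_eq0 n k : 1 < n -> ((k%:R : 'Z_n) == 0)%R = (n %| k).
Proof. by move=> n1; rewrite -val_eqE /= val_Zp_nat. Qed.

Lemma Zn_nat n (x : 'Z_n) : x = ((val x)%:R)%R.
Proof. by rewrite natr_Zp. Qed.

Lemma mem_Sqstar n a : 1 < n -> a \in Sqstar n ->
  exists A, a = ((A ^ 2)%:R)%R /\ ~~ (n %| A ^ 2).
Proof.
move=> n1; rewrite /Sqstar in_setD1 => /andP [a0 /imsetP [x _ ax]]; subst a.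
have E : (x ^+ 2 = ((val x ^ 2)%:R))%R by rewrite natrX -Zn_nat.
exists (val x); split => //.
by rewrite -(Zn_eq0 _ n1) -E.
Qed.

Lemma in_Sqstar n A : 1 < n -> ~~ (n %| A ^ 2) -> ((A ^ 2)%:R : 'Z_n)%R \in Sqstar n.
Proof.
move=> n1 nd; rewrite /Sqstar in_setD1 Zn_eq0 // nd /=.
by apply/imsetP; exists (A%:R)%R => //; rewrite natrX.
Qed.

Lemma consec_wzs n (A : {set 'Z_n}) t (y : 'I_t -> 'Z_n) :
  has_wzs_consec A y -> has_wzs A y.
Proof.
case=> l [r [a [lr [rt [aA s0]]]]].
exists [set i : 'I_t | l <= i < r], a; split; last split.
- apply/set0Pn; exists (Ordinal (leq_trans lr rt)); by rewrite inE /= leqnn lr.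
- by move=> i; rewrite inE; apply: aA.
- by rewrite -[RHS]s0; apply: eq_bigl => i; rewrite inE.
Qed.

Lemma upper n p : prime p -> odd p -> odd (logn p n) -> 1 < n ->
  forall y : 'I_3 -> 'Z_n, has_wzs_consec (Sqstar n) y.
Proof.
move=> pp po ok n1 y.
have n0 : 0 < n by apply: ltnW.
have [m cpm nE] := pfactor_coprime pp n0.
set k := logn p n in ok nE.
have [l [r [c [lr r3 nz dv]]]] := key pp po (fun i => val (y i)).
set P := p ^ k./2.
set M := m * P.
have kE' : k = (k./2).*2.+1 by rewrite -[LHS]odd_double_half ok add1n.
have kE : p ^ k = P * P * p by rewrite {1}kE' expnSr -addnn expnD.
have m0 : 0 < m by move: n0; rewrite nE muln_gt0 => /andP [].
have P0 : 0 < P by rewrite expn_gt0 prime_gt0.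
rewrite prime_coprime // in cpm.
exists l, r, (fun i => ((M * c i) ^ 2)%:R)%R; split => //; split => //; split.
- move=> i /nz ncp; apply: in_Sqstar => //.
  apply/negP => hd.
  have e1 : (M * c i) ^ 2 = (m * (P * P)) * (m * c i ^ 2) by rewrite /M; ring.
  have e2 : n = (m * (P * P)) * p by rewrite nE kE; ring.
  rewrite e1 e2 dvdn_pmul2l ?muln_gt0 ?m0 ?P0 // Euclid_dvdM // in hd.
  case/orP: hd => [pm|pc]; first by rewrite pm in cpm.
  by move: pc; rewrite Euclid_dvdX // (negbTE ncp).
- rewrite (eq_bigr (fun i => (((M * c i) ^ 2 * val (y i))%:R)%R)); last first.
    by move=> i _; rewrite natrM -Zn_nat.
  rewrite -natr_sum; apply/eqP; rewrite Zn_eq0 //.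
  have -> : \sum_(i : 'I_3 | l <= i < r) (M * c i) ^ 2 * val (y i) =
            M ^ 2 * \sum_(i : 'I_3 | l <= i < r) (c i ^ 2 * val (y i)).
    by rewrite big_distrr /=; apply: eq_bigr => i _; rewrite expnMn mulnA.
  case/dvdnP: dv => t ->.
  apply/dvdnP; exists (m * t); rewrite nE kE /M; ring.
Qed.

Lemma lower1 n : 1 < n -> ~ has_wzs (Sqstar n) (fun _ : 'I_1 => 1%R).
Proof.
move=> n1 [I [a [I0 [aS s0]]]].
case/set0Pn: I0 => i iI.
have i0 : i = ord0 by apply: val_inj; case: i iI => [[|]].
rewrite big_mkcond big_ord_recl big_ord0 /= -i0 iI mulr1 addr0 in s0.
by move: (aS i iI); rewrite /Sqstar in_setD1 s0 eqxx.
Qed.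

Lemma lower2 n u : 1 < n -> ~~ odd (logn 2 n) -> u %% 4 = 1 ->
  (forall q, prime q -> odd q -> q %| n -> NR q u) ->
  ~ has_wzs (Sqstar n) (fun i : 'I_2 => if val i == 0 then 1%R else (u%:R)%R).
Proof.
move=> n1 ev u4 hu [I [a [I0 [aS s0]]]].
have cu := coprime_un (ltnW n1) u4 hu.
rewrite big_mkcond !big_ord_recl big_ord0 /= in s0.
set i0 : 'I_2 := ord0 in s0; set i1 : 'I_2 := lift ord0 ord0 in s0.
case/set0Pn: I0 => i iI.
have ii : i = i0 \/ i = i1.
  case: i iI => [[|[|]]] // ? _; [left|right]; exact: val_inj.
case h0: (i0 \in I) in s0; case h1: (i1 \in I) in s0.
- have [A0 [a0E nA0]] := mem_Sqstar n1 (aS _ h0).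
  have [A1 [a1E nA1]] := mem_Sqstar n1 (aS _ h1).
  rewrite a0E a1E mulr1 addr0 -natrM -natrD in s0.
  move/eqP: s0; rewrite Zn_eq0 // => hd.
  exact: pair_contra n1 ev u4 hu nA0 nA1 hd.
- have [A0 [a0E nA0]] := mem_Sqstar n1 (aS _ h0).
  rewrite a0E mulr1 !addr0 in s0.
  by move/eqP: s0; rewrite Zn_eq0 // (negbTE nA0).
- have [A1 [a1E nA1]] := mem_Sqstar n1 (aS _ h1).
  rewrite a1E add0r addr0 -natrM in s0.
  by move/eqP: s0; rewrite Zn_eq0 // Gauss_dvdl // (negbTE nA1).
- by case: ii iI => -> iI; rewrite ?h0 ?h1 in iI.
Qed.

Theorem mainTheorem12 (n : nat) :
  ~ perfect_square n -> ~~ odd (logn 2 n) ->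
  D_is (Sqstar n) 3 /\ C_is (Sqstar n) 3.
Proof.
move=> nsq ev.
have [p pp op] := nonsq_prime nsq.
have n1 : 1 < n.
  case: n nsq ev {op} => [|[|n]] nsq _ //; exfalso; apply: nsq; by [exists 0|exists 1].
have p2 : odd p.
  by case: (even_prime pp) => // p2; rewrite p2 in op; rewrite op in ev.
have [u [u4 hu]] := u_for_n n.
have hu' : forall q, prime q -> odd q -> q %| n -> NR q u.
  by move=> q qp qo qn; apply: hu => //; apply: ltnW.
have up := upper pp p2 op n1.
have low : forall t, 0 < t -> t < 3 -> exists y : 'I_t -> 'Z_n, ~ has_wzs (Sqstar n) y.
  case=> [|[|[|]]] // _ _.
    by exists (fun _ => 1%R); apply: lower1.
  by eexists; apply: (lower2 n1 ev u4 hu').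
split; split => //; split.
- by move=> y; apply: consec_wzs; apply: up.
- by move=> t t0 t3 H; have [y hy] := low t t0 t3; apply: hy; apply: H.
- exact: up.
- by move=> t t0 t3 H; have [y hy] := low t t0 t3; apply: hy; apply: consec_wzs; apply: H.
Qed.
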